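(* Let $\mu\in P(\mathbb{R})$ be a measure that is not a Dirac measure, and write $N_\mu=(\mathbb{R}\setminus\operatorname{conv}(C_\mu))\cup\bigcup_{j} I_j$, where the $I_j$ are the bounded connected components of $N_\mu$ (a disjoint union; the union of the unbounded components of $N_\mu$ equals $\mathbb{R}\setminus\operatorname{conv}(C_\mu)$). Then $$\{\mu\}^1\setminus\Delta=\{\nu\in P(\mathbb{R})\setminus\Delta : \nu(\mathbb{R}\setminus\operatorname{conv}(C_\mu))=1\}\ \cup\ \bigcup_{j}\{\nu\in P(\mathbb{R})\setminus\Delta : \nu(I_j)=1\}.$$
   Context: $P(\mathbb{R})$ is the set of Borel probability measures on $\mathbb{R}$ with the Kuiper distance $d_{Ku}(\mu,\nu)=\sup\{|\mu(I)-\nu(I)| : I\text{ a non-degenerate interval}\}$. $\Delta$ is the set of Dirac measures $\delta_x$ ($x\in\mathbb{R}$). $\{\mu\}^1=\{\nu\in P(\mathbb{R}) : d_{Ku}(\mu,\nu)=1\}$. $N_\mu$ is the union of all non-degenerate intervals $I$ with $\mu(I)=0$, and $C_\mu=\mathbb{R}\setminus N_\mu$ (the co-interval support). $\operatorname{conv}$ denotes convex hull. *)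

(* Defs.v *)
From HB Require Import structures.
From mathcomp Require Import all_boot all_order all_algebra.
From mathcomp Require Import all_classical all_reals all_analysis.
Set Implicit Arguments. Unset Strict Implicit. Unset Printing Implicit Defensive.
Import Order.TTheory GRing.Theory Num.Theory.
Import numFieldNormedType.Exports.
Local Open Scope classical_set_scope.
Local Open Scope ring_scope.

Section Defs.
Variable R : realType.

Definition nd_interval (I : set R) : Prop :=
  (forall x y z, I x -> I z -> x <= y -> y <= z -> I y) /\
  exists x y, I x /\ I y /\ x < y.

Definition d_Ku (mu nu : probability R R) : \bar R :=
  ereal_sup [set `|(mu I - nu I)%E|%E | I in nd_interval].

Definition is_dirac (nu : probability R R) : Prop :=
  exists x : R, forall A : set R, measurable A -> nu A = (\1_A x)%:E.

Definition N_of (mu : probability R R) : set R :=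
  \bigcup_(I in [set I | nd_interval I /\ mu I = 0%E]) I.

Definition C_of (mu : probability R R) : set R := ~` N_of mu.

Definition conv_hull (A : set R) : set R :=
  [set y | exists x z, A x /\ A z /\ x <= y /\ y <= z].

Definition bounded_component (N I : set R) : Prop :=
  exists x, N x /\ I = connected_component N x /\
    exists a b : R, I `<=` `[a, b].
End Defs.

(* Main.v *)
Require Import Defs.
From HB Require Import structures.
From mathcomp Require Import all_boot all_order all_algebra.
From mathcomp Require Import all_classical all_reals all_analysis.
From mathcomp Require Import lra.
Import Order.TTheory GRing.Theory Num.Theory.
Import numFieldNormedType.Exports.
Local Open Scope classical_set_scope.
Local Open Scope ring_scope.

Section H.
Variable R : realType.

Lemma meas_itv {J : set R} : is_interval J -> measurable J.
Proof. by move=> /is_intervalP ->; exact: measurable_itv. Qed.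

Definition cc (u v : R) := [set x : R | u <= x <= v].

Lemma cc_itv u v : is_interval (cc u v).
Proof.
move=> x y /andP[ux _] /andP[_ yv] z /andP[xz zy].
by rewrite /cc /= (le_trans ux xz) (le_trans zy yv).
Qed.

Lemma null_interval (m : probability R R) (J : set R) :
  is_interval J -> (forall u v, J u -> J v -> m (cc u v) = 0%E) -> m J = 0%E.
Proof.
move=> iJ H.
have negcc u v : J u -> J v -> m.-negligible (cc u v).
  by move=> Ju Jv; apply/negligibleP; [apply: meas_itv; exact: cc_itv | exact: H].
pose Smin := [set x | J x /\ forall y, J y -> x <= y].
pose Smax := [set x | J x /\ forall y, J y -> y <= x].
pose A (qr : rat * rat) := [set x | J (ratr qr.1) /\ J (ratr qr.2) /\ cc (ratr qr.1) (ratr qr.2) x].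
pose F (n : nat) := match n with 0 => Smin | 1 => Smax
  | k.+2 => if unpickle k is Some qr then A qr else set0 end.
have nF : forall k, m.-negligible (F k).
  case=> [|[|k]] /=.
  - have [[x [Jx Hx]]|nx] := pselect (exists x, Smin x).
      apply: (negligibleS _ (negcc x x Jx Jx)) => y [Jy Hy].
      by rewrite /cc /= Hx // Hy.
    apply: (negligibleS _ (negligible_set0 m)) => y Sy; apply: nx; by exists y.
  - have [[x [Jx Hx]]|nx] := pselect (exists x, Smax x).
      apply: (negligibleS _ (negcc x x Jx Jx)) => y [Jy Hy].
      by rewrite /cc /= Hx // Hy.
    apply: (negligibleS _ (negligible_set0 m)) => y Sy; apply: nx; by exists y.
  - case: (unpickle k) => [qr|]; last exact: negligible_set0.
    have [[Jq Jr]|nq] := pselect (J (ratr qr.1) /\ J (ratr qr.2)).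
      by apply: (negligibleS _ (negcc _ _ Jq Jr)) => y [_ [_ ?]].
    apply: (negligibleS _ (negligible_set0 m)) => y [? [? _]]; exact: nq.
have : m.-negligible J.
  apply: (negligibleS _ (negligible_bigcup nF)) => x Jx.
  have [xmin|nmin] := pselect (Smin x); first by exists 0%N.
  have [xmax|nmax] := pselect (Smax x); first by exists 1%N.
  have [u [Ju ux]] : exists u, J u /\ u < x.
    apply: contrapT => nu; apply: nmin; split => // y Jy.
    rewrite leNgt; apply/negP => yx; apply: nu; by exists y.
  have [v [Jv xv]] : exists v, J v /\ x < v.
    apply: contrapT => nv; apply: nmax; split => // y Jy.
    rewrite leNgt; apply/negP => yx; apply: nv; by exists y.
  have [q /andP[uq qx]] : exists q : rat, u < ratr q < x.
    by have [q] := rat_in_itvoo ux; rewrite in_itv /=; exists q.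
  have [r /andP[xr rv]] : exists r : rat, x < ratr r < v.
    by have [r] := rat_in_itvoo xv; rewrite in_itv /=; exists r.
  have FE k : F k.+2 = if unpickle k is Some qr then A qr else set0 by [].
  exists (pickle (q, r)).+2; first exact: I.
  rewrite FE pickleK /A.
  split; first by apply: (iJ u x) => //; rewrite !ltW.
  split; first by apply: (iJ x v) => //; rewrite !ltW.
  by rewrite /cc /= !ltW.
by move/negligibleP; apply; exact: meas_itv.
Qed.


Lemma nd_itv {I : set R} : nd_interval I -> is_interval I.
Proof. by case=> H _ x y Ix Iy z /andP[] ; exact: H. Qed.

Lemma pEf (p : probability R R) {A : set R} : measurable A ->
  exists a : R, p A = a%:E /\ 0 <= a /\ a <= 1.
Proof.
move=> mA; exists (fine (p A)); rewrite fineK ?fin_num_measure //; split => //.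
have h0 := measure_ge0 p A; have h1 := probability_le1 p mA.
split; first exact: fine_ge0.
by rewrite -lee_fin fineK ?fin_num_measure.
Qed.

Lemma dirac1 (p : probability R R) x : p [set x] = 1%E -> is_dirac p.
Proof.
move=> px; exists x => A mA; rewrite indicE.
have m1 := measurable_set1 x.
case: (boolP (x \in A)) => xA.
  apply/le_anti; rewrite probability_le1 //= -px le_measure ?inE //.
  by move=> y ->; rewrite -inE.
have hC := probability_setC p m1; rewrite px subee // in hC.
change (p A = 0%E).
apply/le_anti; rewrite measure_ge0 andbT -hC le_measure ?inE //.
- exact: measurableC.
- by move=> y Ay yx; move: xA; rewrite -yx; move/negP; apply; rewrite inE.
Qed.

Lemma nd_of (p : probability R R) J : is_interval J -> p J = 1%E ->
  ~ is_dirac p -> nd_interval J.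
Proof.
move=> iJ pJ nd; split; first by move=> x y z Jx Jz xy yz; apply: (iJ x z) => //; rewrite xy yz.
have [x Jx] : exists x, J x.
  apply: contrapT => nJ; have J0 : J = set0.
    by apply/seteqP; split => // y Jy; apply: nJ; exists y.
  by move: pJ; rewrite J0 measure0 => /(congr1 fine) /= /eqP; rewrite eq_sym oner_eq0.
have [[y [Jy yx]]|ny] := pselect (exists y, J y /\ y != x).
  have [xy|yx'] := ltP x y; first by exists x, y.
  by exists y, x; rewrite lt_neqAle yx yx'.
have Jx1 : J = [set x].
  apply/seteqP; split => [y Jy|y ->//]; apply: contrapT => yx.
  by apply: ny; exists y; split => //; apply/eqP.
by exfalso; apply: nd; apply: (@dirac1 p x); rewrite -Jx1.
Qed.


Lemma lemeas (p : probability R R) {A B : set R} : measurable A -> measurable B ->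
  A `<=` B -> (p A <= p B)%E.
Proof. by move=> mA mB AB; rewrite le_measure ?inE. Qed.

Definition lo (y : R) := [set x : R | x <= y].
Definition hi (y : R) := [set x : R | y <= x].

Lemma mcc u v : measurable (cc u v). Proof. apply: meas_itv; exact: cc_itv. Qed.
Lemma lo_itv y : is_interval (lo y).
Proof. by move=> a b _ by' z /andP[_ zb]; exact: le_trans zb by'. Qed.
Lemma hi_itv y : is_interval (hi y).
Proof. by move=> a b ya _ z /andP[az _]; exact: le_trans ya az. Qed.
Lemma mlo y : measurable (lo y). Proof. apply: meas_itv; exact: lo_itv. Qed.
Lemma mhi y : measurable (hi y). Proof. apply: meas_itv; exact: hi_itv. Qed.

Lemma keyK (m1 m2 : probability R R) :
  ~ is_dirac m2 ->
  (forall e : R, 0 < e -> exists I, nd_interval I /\ (m1 I < e%:E)%E /\ ((1 - e)%:E < m2 I)%E) ->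
  exists J, nd_interval J /\ m1 J = 0%E /\ m2 J = 1%E.
Proof.
move=> nd H.
pose J := [set y | (0 < m2 (lo y))%E /\ (0 < m2 (hi y))%E].
have iJ : is_interval J.
  move=> x y [lx _] [_ hy] z /andP[xz zy]; split.
  - apply: (lt_le_trans lx); apply: le_measure; rewrite ?inE; [exact: mlo|exact: mlo|].
    by move=> w /= wx; exact: le_trans wx xz.
  - apply: (lt_le_trans hy); apply: le_measure; rewrite ?inE; [exact: mhi|exact: mhi|].
    by move=> w /= wx; exact: le_trans zy wx.
have m1J : m1 J = 0%E.
  apply: (null_interval _ _ iJ) => u v [lu _] [_ hv].
  have [a [ea [a0 a1]]] := pEf m1 (mcc u v).
  have [l [el [l0 l1]]] := pEf m2 (mlo u).
  have [h [eh [h0 h1]]] := pEf m2 (mhi v).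
  rewrite ea; congr (_%:E); apply: contrapT => /eqP an0.
  have apos : 0 < a by rewrite lt_neqAle eq_sym an0 a0.
  move: lu hv; rewrite el eh !lte_fin => lpos hpos.
  pose e := Num.min a (Num.min l h).
  have epos : 0 < e by rewrite !lt_min apos lpos hpos.
  have ea' : e <= a by rewrite /e ge_min lexx.
  have el' : e <= l by rewrite /e !ge_min lexx orbT.
  have eh' : e <= h by rewrite /e !ge_min lexx !orbT.
  have [I [ndI [m1I m2I]]] := H e epos.
  have mI := meas_itv (nd_itv ndI).
  have [b [eb _]] := pEf m1 mI; have [c [ec [_ c1]]] := pEf m2 mI.
  rewrite eb ec !lte_fin in m1I m2I.
  have [x [Ix xu]] : exists x, I x /\ x <= u.
    apply: contrapT => nx.
    have sub : I `<=` ~` lo u by move=> x Ix xu; apply: nx; exists x.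
    have := lemeas m2 mI (measurableC (mlo u)) sub.
    rewrite ec (probability_setC m2 (mlo u)) el -EFinB lee_fin => hc.
    clear -m2I hc el'; lra.
  have [y [Iy vy]] : exists y, I y /\ v <= y.
    apply: contrapT => nx.
    have sub : I `<=` ~` hi v by move=> w Iw wv; apply: nx; exists w.
    have := lemeas m2 mI (measurableC (mhi v)) sub.
    rewrite ec (probability_setC m2 (mhi v)) eh -EFinB lee_fin => hc.
    clear -m2I hc eh'; lra.
  have sub : cc u v `<=` I.
    move=> z /andP[uz zv]; apply: (nd_itv ndI x y Ix Iy).
    by rewrite (le_trans xu uz) (le_trans zv vy).
  have := lemeas m1 (mcc u v) mI sub.
  rewrite ea eb lee_fin => ab; clear -m1I ab ea'; lra.
have m2J : m2 J = 1%E.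
  pose D := [set y | m2 (lo y) = 0%E].
  pose U := [set y | m2 (hi y) = 0%E].
  have iD : is_interval D.
    move=> x y _ Dy z /andP[_ zy]; apply/le_anti; rewrite measure_ge0 andbT.
    rewrite -[leRHS]Dy le_measure ?inE; [by []|exact: mlo|exact: mlo|].
    by move=> w /= wz; exact: le_trans wz zy.
  have iU : is_interval U.
    move=> x y Ux _ z /andP[xz _]; apply/le_anti; rewrite measure_ge0 andbT.
    rewrite -[leRHS]Ux le_measure ?inE; [by []|exact: mhi|exact: mhi|].
    by move=> w /= wz; exact: le_trans xz wz.
  have nD : m2.-negligible D.
    apply/negligibleP; first exact: meas_itv.
    apply: null_interval => // u v _ Dv; apply/le_anti; rewrite measure_ge0 andbT.
    rewrite -[leRHS]Dv le_measure ?inE; [by []|exact: mcc|exact: mlo|].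
    by move=> w /andP[_ wv].
  have nU : m2.-negligible U.
    apply/negligibleP; first exact: meas_itv.
    apply: null_interval => // u v Uu _; apply/le_anti; rewrite measure_ge0 andbT.
    rewrite -[leRHS]Uu le_measure ?inE; [by []|exact: mcc|exact: mhi|].
    by move=> w /andP[uw _].
  have nJ : m2.-negligible (~` J).
    apply: (negligibleS _ (negligibleU nD nU)) => y nJy.
    have [ly|ly] := pselect (0 < m2 (lo y))%E; last first.
      by left; apply/le_anti; rewrite measure_ge0 andbT leNgt; apply/negP.
    right; apply/le_anti; rewrite measure_ge0 andbT leNgt; apply/negP => hy.
    exact: nJy.
  have := probability_setC m2 (meas_itv iJ).
  rewrite (measure_negligible (measurableC (meas_itv iJ)) nJ).
  have [j [ej _]] := pEf m2 (meas_itv iJ).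
  rewrite ej -EFinB => /(congr1 fine) /= h; congr (_%:E); lra.
exists J; split; [exact: (nd_of _ _ iJ m2J nd) | by split].
Qed.


Lemma N_negl (mu : probability R R) : mu.-negligible (N_of mu).
Proof.
pose M (q : rat) := [set x | exists I, (nd_interval I /\ mu I = 0%E) /\ I (ratr q) /\ I x].
have iM q : is_interval (M q).
  move=> x y [I1 [[nd1 z1] [q1 x1]]] [I2 [[nd2 z2] [q2 y2]]] z /andP[xz zy].
  have [zq|qz] := leP z (ratr q).
  - exists I1; split => //; split => //.
    by apply: (nd_itv nd1 x (ratr q)) => //; rewrite xz zq.
  - exists I2; split => //; split => //.
    by apply: (nd_itv nd2 (ratr q) y) => //; rewrite (ltW qz) zy.
have nM q : mu.-negligible (M q).
  apply/negligibleP; first exact: meas_itv.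
  apply: (null_interval _ _ (iM q)) => u v [I1 [[nd1 z1] [q1 u1]]] [I2 [[nd2 z2] [q2 v2]]].
  have n1 : mu.-negligible I1 by apply/negligibleP => //; exact: (meas_itv (nd_itv nd1)).
  have n2 : mu.-negligible I2 by apply/negligibleP => //; exact: (meas_itv (nd_itv nd2)).
  apply/negligibleP; first exact: mcc.
  apply: (negligibleS _ (negligibleU n1 n2)) => z /andP[uz zv].
  have [zq|qz] := leP z (ratr q).
  - by left; apply: (nd_itv nd1 u (ratr q)) => //; rewrite uz zq.
  - by right; apply: (nd_itv nd2 (ratr q) v) => //; rewrite (ltW qz) zv.
pose G n := if unpickle n is Some q then M q else set0.
have nG : forall n, mu.-negligible (G n).
  by move=> n; rewrite /G; case: unpickle => [q|]; [exact: nM|exact: negligible_set0].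
apply: (negligibleS _ (negligible_bigcup nG)) => x [I [ndI I0] Ix].
have [a [b [Ia [Ib ab]]]] := ndI.2.
have [q /andP[aq qb]] : exists q : rat, a < ratr q < b.
  by have [q] := rat_in_itvoo ab; rewrite in_itv /=; exists q.
have GE k : G k = if unpickle k is Some q then M q else set0 by [].
exists (pickle q); first exact: Logic.I.
rewrite GE pickleK; exists I; split => //; split => //.
by apply: (nd_itv ndI a b) => //; rewrite !ltW.
Qed.


Lemma probC1 (p : probability R R) A : measurable A ->
  (p (~` A) = 1%E <-> p A = 0%E).
Proof.
move=> mA; have [a [ea _]] := pEf p mA.
rewrite (probability_setC p mA) ea -EFinB; split.
  by move=> /(congr1 fine) /= h; congr (_%:E); lra.
by move=> /(congr1 fine) /= h; congr (_%:E); lra.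
Qed.

Lemma probC0 (p : probability R R) A : measurable A ->
  (p (~` A) = 0%E <-> p A = 1%E).
Proof.
move=> mA; have [a [ea _]] := pEf p mA.
rewrite (probability_setC p mA) ea -EFinB; split.
  by move=> /(congr1 fine) /= h; congr (_%:E); lra.
by move=> /(congr1 fine) /= h; congr (_%:E); lra.
Qed.

Lemma conv_itv (A : set R) : is_interval (conv_hull A).
Proof.
move=> x y [x1 [z1 [A1 [_ [x1x _]]]]] [x2 [z2 [_ [A2 [_ yz2]]]]] z /andP[xz zy].
exists x1, z2; split; [done|split; [done|]].
split; [exact: le_trans x1x xz | exact: le_trans zy yz2].
Qed.

Lemma up1 (p : probability R R) A B : measurable A -> measurable B ->
  A `<=` B -> p A = 1%E -> p B = 1%E.
Proof.
move=> mA mB AB pA; apply/le_anti; rewrite probability_le1 //= -pA.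
exact: lemeas.
Qed.

Lemma down0 (p : probability R R) A B : measurable A -> measurable B ->
  A `<=` B -> p B = 0%E -> p A = 0%E.
Proof.
move=> mA mB AB pB; apply/le_anti; rewrite measure_ge0 andbT -pB.
exact: lemeas.
Qed.

End H.
Arguments meas_itv {R J}.
Arguments cc {R}.
Arguments cc_itv {R}.
Arguments null_interval {R}.
Arguments nd_itv {R I}.
Arguments pEf {R} p {A}.
Arguments dirac1 {R}.
Arguments nd_of {R}.
Arguments lemeas {R} p {A B}.
Arguments lo {R}.
Arguments hi {R}.
Arguments mcc {R}.
Arguments lo_itv {R}.
Arguments hi_itv {R}.
Arguments mlo {R}.
Arguments mhi {R}.
Arguments keyK {R}.
Arguments N_negl {R}.
Arguments probC1 {R}.
Arguments probC0 {R}.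
Arguments conv_itv {R}.
Arguments up1 {R}.
Arguments down0 {R}.

Theorem lemma3p3 (R : realType) (mu : probability R R) :
  ~ is_dirac mu ->
  forall nu : probability R R,
    (d_Ku mu nu = 1%E /\ ~ is_dirac nu) <->
    (~ is_dirac nu /\
      (nu (~` conv_hull (C_of mu)) = 1%E \/
       exists I, bounded_component (N_of mu) I /\ nu I = 1%E)).
Proof.
move=> ndmu nu.
have mconv : measurable (conv_hull (C_of mu)) by apply: meas_itv; exact: conv_itv.
have mconvC : measurable (~` conv_hull (C_of mu)) by exact: measurableC.
have NmuN := N_negl mu.
split.
- move=> [d1 ndnu]; split => //.
  pose P1 (e : R) I := nd_interval I /\ (mu I < e%:E)%E /\ ((1 - e)%:E < nu I)%E.
  pose P2 (e : R) I := nd_interval I /\ (nu I < e%:E)%E /\ ((1 - e)%:E < mu I)%E.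
  have hsup : forall e : R, 0 < e -> exists I, P1 e I \/ P2 e I.
    move=> e e0.
    have : ((1 - e)%:E < d_Ku mu nu)%E by rewrite d1 lte_fin; lra.
    move/ereal_sup_gt => [y [I ndI <-] lt].
    have mI := meas_itv (nd_itv ndI).
    have [a [ea [a0 a1]]] := pEf mu mI; have [b [eb [b0 b1]]] := pEf nu mI.
    exists I; rewrite /P1 /P2 ea eb !lte_fin.
    move: lt; rewrite ea eb -EFinB /= lte_fin ltr_normr => /orP[] h.
      by right; split => //; split; lra.
    by left; split => //; split; lra.
  have [HA|HB] : (forall e : R, 0 < e -> exists I, P1 e I) \/
                 (forall e : R, 0 < e -> exists I, P2 e I).
    have [A|nA] := pselect (forall e : R, 0 < e -> exists I, P1 e I); first by left.
    right => e e0.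
    have [e1 [e10 ne1]] : exists e1 : R, 0 < e1 /\ ~ exists I, P1 e1 I.
      apply: contrapT => h; apply: nA => e' e'0; apply: contrapT => h'.
      by apply: h; exists e'.
    have e'0 : 0 < Num.min e e1 by rewrite lt_min e0 e10.
    have me : Num.min e e1 <= e by rewrite ge_min lexx.
    have me1 : Num.min e e1 <= e1 by rewrite ge_min lexx orbT.
    have [I [[ndI [m1 m2]]|[ndI [m1 m2]]]] := hsup _ e'0.
      exfalso; apply: ne1; exists I; split => //; split.
        by apply: (lt_le_trans m1); rewrite lee_fin.
      by apply: le_lt_trans m2; rewrite lee_fin; lra.
    exists I; split => //; split.
      by apply: (lt_le_trans m1); rewrite lee_fin.
    by apply: le_lt_trans m2; rewrite lee_fin; lra.
  + have [J [ndJ [muJ nuJ]]] := keyK _ _ ndnu HA.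
    have JN : J `<=` N_of mu by move=> y Jy; exists J.
    have [x [_ [Jx _]]] := ndJ.2.
    pose K := connected_component (N_of mu) x.
    have JK : J `<=` K.
      apply: connected_component_max => //.
      by apply/connected_intervalP; exact: nd_itv.
    have iK : is_interval K by apply/connected_intervalP; exact: component_connected.
    have mK : measurable K by exact: meas_itv.
    have nuK : nu K = 1%E by apply: (up1 _ _ _ (meas_itv (nd_itv ndJ)) mK JK nuJ).
    have [[a [b Kab]]|nb] := pselect (exists a b : R, K `<=` `[a, b]).
      right; exists K; split => //; exists x; split; first exact: JN.
      by split => //; exists a, b.
    left; apply: (up1 _ _ _ mK mconvC) => // y Ky [x1 [z1 [Cx1 [Cz1 [x1y yz1]]]]].
    apply: nb; exists x1, z1 => w Kw /=; rewrite in_itv /=; apply/andP; split.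
      rewrite leNgt; apply/negP => wx1; apply: Cx1.
      apply: (connected_component_sub (x := x)); apply: (iK w y) => //.
      by rewrite (ltW wx1) x1y.
    rewrite leNgt; apply/negP => wz1; apply: Cz1.
    apply: (connected_component_sub (x := x)); apply: (iK y w) => //.
    by rewrite (ltW wz1) yz1.
  + have [J [ndJ [nuJ muJ]]] := keyK _ _ ndmu HB.
    have mJ := meas_itv (nd_itv ndJ).
    have muC : mu (~` J) = 0%E by apply/probC0.
    have nuC : nu (~` J) = 1%E by apply/probC1.
    left; apply: (up1 _ _ _ (measurableC mJ) mconvC _ nuC).
    move=> y nJy [x1 [z1 [Cx1 [Cz1 [x1y yz1]]]]].
    have [j [_ [Jj _]]] := ndJ.2.
    have [yj|jy] := ltP y j.
      apply: Cx1; exists (lo y); last by [].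
      split; first split.
      * move=> u w z Lu Lz _ wz; exact: le_trans wz Lz.
      * exists (y - 1), y; rewrite /lo /=; split; first lra.
        by split; [rewrite lexx | lra].
      apply: (down0 _ _ _ (mlo y) (measurableC mJ) _ muC) => w wy Jw.
      by apply: nJy; apply: (nd_itv ndJ w j) => //; rewrite wy ltW.
    apply: Cz1; exists (hi y); last by [].
    split; first split.
    * move=> u w z Lu Lz uw _; exact: le_trans Lu uw.
    * exists y, (y + 1); rewrite /hi /=; split; first by rewrite lexx.
      by split; lra.
    apply: (down0 _ _ _ (mhi y) (measurableC mJ) _ muC) => w yw Jw.
    by apply: nJy; apply: (nd_itv ndJ j w) => //; rewrite yw jy.
- have dle : (d_Ku mu nu <= 1)%E.
    apply: ge_ereal_sup => _ [I ndI <-].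
    have mI := meas_itv (nd_itv ndI).
    have [a [ea [a0 a1]]] := pEf mu mI; have [b [eb [b0 b1]]] := pEf nu mI.
    rewrite ea eb -EFinB /= lee_fin ler_norml; apply/andP; split; lra.
  have dge : forall I, nd_interval I -> (`|mu I - nu I| = 1)%E -> (1 <= d_Ku mu nu)%E.
    move=> I ndI h; apply: le_ereal_sup_tmp; exists 1%E => //.
    by exists I => //.
  move=> [ndnu [nuC | [K [[x [Nx [KE [a [b Kab]]]]] nuK]]]]; split => //;
    apply/le_anti; rewrite dle /=.
  + have muC : mu (~` conv_hull (C_of mu)) = 0%E.
      apply: measure_negligible => //; apply: (negligibleS _ NmuN) => y ny.
      apply: contrapT => nN; apply: ny; exists y, y; split; first exact: nN.
      by split; [exact: nN|rewrite lexx].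
    have muc : mu (conv_hull (C_of mu)) = 1%E by apply/probC0.
    have nuc : nu (conv_hull (C_of mu)) = 0%E by apply/probC1.
    apply: (dge (conv_hull (C_of mu))).
      exact: (nd_of _ _ (conv_itv _) muc ndmu).
    by rewrite muc nuc -EFinB /= subr0 normr1.
  + have iK : is_interval K by rewrite KE; apply/connected_intervalP; exact: component_connected.
    have mK : measurable K by exact: meas_itv.
    have muK : mu K = 0%E.
      apply: measure_negligible => //; apply: (negligibleS _ NmuN).
      by rewrite KE; exact: connected_component_sub.
    apply: (dge K); first exact: (nd_of _ _ iK nuK ndnu).
    by rewrite muK nuK -EFinB /= sub0r normrN normr1.
Qed.
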